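(* Let $s:\mathcal{X}\times\mathcal{Y}\to\mathbb{R}$ be measurable, $S_1,\dots,S_d$ probability distributions on $\mathcal{X}\times\mathcal{Y}$, $f$ a function as described in the context and $\rho>0$. Let $F_1,\dots,F_d$ be the c.d.f.'s of $s\#S_1,\dots,s\#S_d$ and $F_{\min}(x)=\min_{1\le i\le d}F_i(x)$. Let $$\mathcal{P}_{f,\rho}\coloneqq\{S\text{ a distribution on }\mathbb{R}:\exists S_0\in\mathcal{CH}(s\#S_1,\dots,s\#S_d),\ D_f(S\Vert S_0)\le\rho\}$$ and $\widetilde F(t;\mathcal{P}_{f,\rho})\coloneqq\inf_{P\in\mathcal{P}_{f,\rho}}P(S\le t)$. Then for every $t\in\mathbb{R}$, $$\widetilde F(t;\mathcal{P}_{f,\rho})=g_{f,\rho}\left(F_1(t),\dots,F_d(t)\right)=g_{f,\rho}\left(F_{\min}(t)\right).$$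
   Context: $f:\mathbb{R}\to\mathbb{R}\cup\{+\infty\}$ is a closed convex function with $f(1)=0$ and $f(t)=+\infty$ for $t<0$; for $P\ll Q$, $D_f(P\Vert Q)\coloneqq\int f\left(\frac{dP}{dQ}\right)dQ$. $\mathcal{CH}(P_1,\dots,P_d)\coloneqq\{\sum_i\lambda_iP_i:\lambda_i\ge0,\sum_i\lambda_i=1\}$; $s\#T$ is the push-forward $(s\#T)(A)=T(s^{-1}(A))$. With $h(z,\beta)\coloneqq\beta f(z/\beta)+(1-\beta)f((1-z)/(1-\beta))$, define for $\beta_1,\dots,\beta_d\in[0,1]$: $g_{f,\rho}(\beta_1,\dots,\beta_d)\coloneqq\inf\{z\in[0,1]:\inf_{\lambda\ge0,\sum_i\lambda_i=1}h(z,\sum_i\lambda_i\beta_i)\le\rho\}$; for $d=1$, $g_{f,\rho}(\beta)=\inf\{z\in[0,1]:h(z,\beta)\le\rho\}$. *)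

(* Defs.v *)
From HB Require Import structures.
From mathcomp Require Import all_boot all_order all_algebra.
From mathcomp Require Import all_classical all_reals all_analysis.
Set Implicit Arguments. Unset Strict Implicit. Unset Printing Implicit Defensive.
Import Order.TTheory GRing.Theory Num.Theory.
Import numFieldNormedType.Exports.
Local Open Scope classical_set_scope.
Local Open Scope ring_scope.
Local Open Scope ereal_scope.

Section defs.
Variable R : realType.

Definition closed_convex_fdiv_gen (f : R -> \bar R) : Prop :=
  [/\ forall x, f x != -oo,
      forall (x y lam : R), (0 <= lam <= 1)%R ->
        f (lam * x + (1 - lam) * y)%R <= lam%:E * f x + (1 - lam)%:E * f y,
      closed [set p : R * R | f p.1 <= p.2%:E],
      f 1%R = 0 &
      forall t, (t < 0)%R -> f t = +oo].

Definition is_density (Q P : set R -> \bar R) (h : R -> R) : Prop :=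
  [/\ measurable_fun setT h, forall x, (0 <= h x)%R &
      forall A, measurable A -> P A = \int[Q]_(x in A) (h x)%:E ].

(* D_f(P || Q) <= rho, where D_f(P||Q) = \int f (dP/dQ) dQ is defined for P << Q *)
Definition fdiv_le (f : R -> \bar R) (P : set R -> \bar R)
    (Q : {measure set R -> \bar R}) (rho : R) : Prop :=
  exists h : R -> R, is_density Q P h /\ \int[Q]_x f (h x) <= rho%:E.

Definition in_CH (d : nat) (mus : 'I_d -> set R -> \bar R) (S0 : set R -> \bar R) : Prop :=
  exists lam : 'I_d -> R, [/\ forall i, (0 <= lam i)%R, (\sum_(i < d) lam i)%R = 1%R &
    forall A, measurable A -> S0 A = \sum_(i < d) (lam i)%:E * mus i A].

(* perspective term  beta f(z / beta), with the convention
   0 f(0/0) = 0 and 0 f(z/0) = +oo for z <> 0 (absolute continuity) *)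
Definition persp (f : R -> \bar R) (z beta : R) : \bar R :=
  if (0 < beta)%R then beta%:E * f (z / beta)%R
  else if z == 0%R then 0 else +oo.

Definition hfun (f : R -> \bar R) (z beta : R) : \bar R :=
  persp f z beta + persp f (1 - z)%R (1 - beta)%R.

Definition simplex (d : nat) : set ('I_d -> R) :=
  [set lam | (forall i, (0 <= lam i)%R) /\ (\sum_(i < d) lam i)%R = 1%R].

Definition gfun (f : R -> \bar R) (rho : R) (d : nat) (beta : 'I_d -> R) : R :=
  inf [set z : R | (0 <= z <= 1)%R /\
        ereal_inf [set hfun f z (\sum_(i < d) lam i * beta i)%R | lam in @simplex d]
          <= rho%:E].

Definition gfun1 (f : R -> \bar R) (rho : R) (beta : R) : R :=
  inf [set z : R | (0 <= z <= 1)%R /\ hfun f z beta <= rho%:E].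

End defs.

(* Main.v *)
Require Import Defs.
From HB Require Import structures.
From mathcomp Require Import all_boot all_order all_algebra.
From mathcomp Require Import all_classical all_reals all_analysis.
From mathcomp Require Import ring lra measurable_realfun.
Import Order.TTheory GRing.Theory Num.Theory.
Import numFieldNormedType.Exports.
Local Open Scope classical_set_scope.
Local Open Scope ring_scope.
Local Open Scope ereal_scope.
Section fprops.
Variable R : realType.
Local Set Implicit Arguments.
Variable f : R -> \bar R.
Hypothesis hf : closed_convex_fdiv_gen f.

Let fNy x : f x != -oo. Proof. by case: hf. Qed.
Let fconv (x y lam : R) : (0 <= lam <= 1)%R ->
  f (lam * x + (1 - lam) * y)%R <= lam%:E * f x + (1 - lam)%:E * f y.
Proof. by case: hf => _ h _ _ _; exact: h. Qed.
Let f1 : f 1%R = 0. Proof. by case: hf. Qed.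

Lemma pmul_Ny (b : R) (y : \bar R) : (0 < b)%R -> y != -oo -> b%:E * y != -oo.
Proof. by move=> b0; case: y => [r| |] _ //; rewrite gt0_muley ?lte_fin. Qed.

Lemma persp_Ny z b : persp f z b != -oo.
Proof.
rewrite /persp; case: ifP => b0; last by case: ifP.
exact: pmul_Ny.
Qed.

Lemma hfun_self b : (0 <= b <= 1)%R -> hfun f b b = 0.
Proof.
case/andP=> b0 b1; rewrite /hfun /persp.
have [->|bn0] := eqVneq b 0%R.
  by rewrite ltxx /= subr0 ltr01 divr1 f1 mule0 add0e.
have bp : (0 < b)%R by rewrite lt0r bn0.
rewrite bp divff // f1 mule0 add0e.
case: ifP => h; first by rewrite divff ?f1 ?mule0 // gt_eqF.
move/negbT: h; rewrite -leNgt => h.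
have -> : (1 - b = 0)%R by lra.
by rewrite eqxx.
Qed.

Lemma persp_scale {x b c th : R} : (0 <= x)%R -> (0 < b)%R -> (0 < c)%R ->
  (0 <= th <= 1)%R -> b = (th * x + (1 - th) * c)%R ->
  b%:E * f (x / b) <= ((1 - th) * c)%:E * f (x / c).
Proof.
move=> x0 b0 c0 /andP[th0 th1] hb.
pose mu := (th * x / b)%R.
have mu0 : (0 <= mu)%R by apply: divr_ge0; [exact: mulr_ge0|exact: ltW].
have mu1 : (mu <= 1)%R.
  rewrite /mu ler_pdivrMr // mul1r. rewrite [leRHS]hb lerDl. by rewrite mulr_ge0 ?subr_ge0 // ltW.
have e : (x / b = mu * 1 + (1 - mu) * (x / c))%R.
  have bn0 : b != 0%R by rewrite gt_eqF.
  have cn0 : c != 0%R by rewrite gt_eqF.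
  have bn0' : (th * x + (1 - th) * c)%R != 0%R by rewrite -hb.
  by rewrite /mu hb; field; rewrite bn0' cn0.
have h := fconv 1 (x / c) mu (introT andP (conj mu0 mu1)).
rewrite -e f1 mule0 add0e in h.
rewrite -(lee_pmul2l (x := b%:E)) ?lte_fin // in h.
apply: (le_trans h); rewrite muleA -EFinM.
suff -> : (b * (1 - mu) = (1 - th) * c)%R by [].
have bn0' : (th * x + (1 - th) * c)%R != 0%R by rewrite -hb gt_eqF.
by rewrite /mu hb; field.
Qed.

Lemma adde_def_Ny (x y : \bar R) : x != -oo -> y != -oo -> x +? y.
Proof. by move=> /negbTE hx /negbTE hy; rewrite /adde_def hx hy !andbF. Qed.

Lemma hfun_ge0 z b : (0 <= z <= 1)%R -> (0 <= b <= 1)%R -> 0 <= hfun f z b.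
Proof.
case/andP=> z0 z1 /andP[b0 b1]; rewrite /hfun /persp.
have [->|bn0] := eqVneq b 0%R.
  rewrite ltxx subr0 ltr01 divr1 mul1e.
  have [->|zn0] := eqVneq z 0%R; first by rewrite subr0 f1 adde0.
  by rewrite addye.
have bp : (0 < b)%R by rewrite lt0r bn0.
rewrite bp.
have [b1'|bn1] := eqVneq b 1%R.
  rewrite b1' subrr ltxx divr1 mul1e.
  have [z1'|zn1] := eqVneq (1 - z)%R 0%R.
    have -> : z = 1%R by lra.
    by rewrite f1 add0e.
  by rewrite addey.
have bp1 : (0 < 1 - b)%R by rewrite subr_gt0 lt_neqAle bn1.
rewrite bp1.
have := fconv (z / b) ((1 - z) / (1 - b)) b (introT andP (conj b0 b1)).
rewrite mulrC divfK ?gt_eqF // [X in (z + X)%R]mulrC divfK ?gt_eqF //.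
have -> : (z + (1 - z) = 1)%R by ring.
by rewrite f1.
Qed.

Lemma hfun_mono z b c : (0 <= z)%R -> (z < b)%R -> (b <= c)%R -> (c <= 1)%R ->
  hfun f z b <= hfun f z c.
Proof.
move=> z0 zb bc c1.
have z1 : (z <= 1)%R by lra.
have [c1'|cn1] := eqVneq c 1%R.
  rewrite /hfun /persp c1' ltr01 subrr ltxx.
  have -> : ((1 - z == 0) = false)%R by apply/negbTE; rewrite subr_eq0 eq_sym; apply/eqP; lra.
  by rewrite addey ?leey // pmul_Ny.
have c1s : (c < 1)%R by rewrite lt_neqAle cn1.
have bp : (0 < b)%R by lra.
have cp : (0 < c)%R by lra.
have bp1 : (0 < 1 - b)%R by lra.
have cp1 : (0 < 1 - c)%R by lra.
pose th := ((c - b) / (c - z))%R.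
have czp : (0 < c - z)%R by lra.
have th0 : (0 <= th)%R by apply: divr_ge0; lra.
have th1 : (th <= 1)%R by rewrite /th ler_pdivrMr // mul1r; lra.
have th01 : (0 <= th <= 1)%R by rewrite th0 th1.
have hb : b = (th * z + (1 - th) * c)%R.
  by rewrite /th; field; rewrite gt_eqF.
have hb' : (1 - b = th * (1 - z) + (1 - th) * (1 - c))%R.
  clearbody th; subst b; ring.
have h1 := persp_scale z0 bp cp th01 hb.
have z0' : (0 <= 1 - z)%R by lra.
have h2 := persp_scale z0' bp1 cp1 th01 hb'.
have H0 : 0 <= hfun f z c by apply: hfun_ge0; lra.
rewrite /hfun /persp bp cp bp1 cp1.
apply: le_trans (leeD h1 h2) _.
rewrite !EFinM -!muleA -muleDr ?adde_def_Ny ?pmul_Ny //.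
apply: gee_pMl => //; last by rewrite lee_fin; lra.
by move: H0; rewrite /hfun /persp cp cp1.
Qed.

End fprops.
Section gprops.
Variable R : realType.
Local Set Implicit Arguments.
Variable f : R -> \bar R.
Hypothesis hf : closed_convex_fdiv_gen f.
Variable rho : R.
Hypothesis rho0 : (0 <= rho)%R.

Let Z b := [set z : R | (0 <= z <= 1)%R /\ hfun f z b <= rho%:E].

Lemma Z_lb b : has_lbound (Z b).
Proof. by exists 0%R => z [/andP[]]. Qed.

Lemma Z_self b : (0 <= b <= 1)%R -> Z b b.
Proof. by move=> hb; split => //; rewrite hfun_self // lee_fin. Qed.

Lemma gfun1_le m z c : (0 <= m)%R -> (0 <= z <= 1)%R -> (m <= c)%R -> (c <= 1)%R ->
  hfun f z c <= rho%:E -> (gfun1 f rho m <= z)%R.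
Proof.
move=> m0 /andP[z0 z1] mc c1 hz.
have m1 : (0 <= m <= 1)%R by rewrite m0 /=; lra.
have [mz|zm] := leP m z.
  by apply: le_trans mz; apply: ge_inf; [exact: Z_lb|exact: Z_self].
apply: ge_inf; first exact: Z_lb.
split; first by rewrite z0 z1.
by apply: le_trans hz; apply: hfun_mono.
Qed.

Lemma sum_bounds {d} {beta : 'I_d -> R} {m lam} :
  (forall i, m <= beta i <= 1)%R -> simplex lam ->
  (m <= \sum_(i < d) lam i * beta i <= 1)%R.
Proof.
move=> hb [l0 l1]; apply/andP; split.
  rewrite -[m]mul1r -l1 mulr_suml; apply: ler_sum => i _.
  by rewrite ler_wpM2l //; case/andP: (hb i).
rewrite -l1; apply: ler_sum => i _.
by rewrite ler_piMr //; case/andP: (hb i).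
Qed.

Lemma gfun_eq d (beta : 'I_d -> R) m (i0 : 'I_d) :
  (0 <= m)%R -> beta i0 = m -> (forall i, m <= beta i <= 1)%R ->
  gfun f rho beta = gfun1 f rho m.
Proof.
move=> m0 bi0 hb.
have m1 : (0 <= m <= 1)%R by rewrite m0 -bi0; case/andP: (hb i0).
pose Zf := [set z : R | (0 <= z <= 1)%R /\
  ereal_inf [set hfun f z (\sum_(i < d) lam i * beta i)%R | lam in @simplex R d] <= rho%:E].
change (inf Zf = gfun1 f rho m).
have Zf_lb : has_lbound Zf by exists 0%R => z [/andP[]].
have ZZf : Z m `<=` Zf.
  move=> z [z01 hz]; split => //; apply: le_trans hz.
  apply: ge_ereal_inf; exists (hfun f z m) => //.
  exists (fun i => (i == i0)%:R); last first.
    congr hfun; rewrite (bigD1 i0) //= eqxx mul1r bi0 big1 ?addr0 // => i /negbTE ->.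
    by rewrite mul0r.
  split; first by move=> i; rewrite ler0n.
  by rewrite (bigD1 i0) //= eqxx big1 ?addr0 // => i /negbTE ->.
have Zfm : forall z, Zf z -> (gfun1 f rho m <= z)%R.
  move=> z [/andP[z0 z1] hz].
  have [mz|zm] := leP m z.
    by apply: le_trans mz; apply: ge_inf; [exact: Z_lb|exact: Z_self].
  apply: ge_inf; first exact: Z_lb.
  split; first by rewrite z0 z1.
  apply: le_trans hz; apply/ereal_infP => _ [lam hlam <-].
  have /andP[s1 s2] := sum_bounds hb hlam.
  exact: hfun_mono.
apply/eqP; rewrite eq_le; apply/andP; split.
  apply: lb_le_inf; first by exists m; exact: Z_self.
  by move=> z Zz; apply: ge_inf => //; exact: ZZf.
apply: lb_le_inf; first by exists m; apply: ZZf; exact: Z_self.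
exact: Zfm.
Qed.

End gprops.
Section convex_an.
Variable R : realType.
Local Set Implicit Arguments.
Variable f : R -> \bar R.
Hypothesis hf : closed_convex_fdiv_gen f.

Let fNy x : f x != -oo. Proof. by case: hf. Qed.
Let fconv (x y lam : R) : (0 <= lam <= 1)%R ->
  f (lam * x + (1 - lam) * y)%R <= lam%:E * f x + (1 - lam)%:E * f y.
Proof. by case: hf => _ h _ _ _; exact: h. Qed.
Let f1 : f 1%R = 0. Proof. by case: hf. Qed.

Lemma fin_lty {x} : f x < +oo -> f x \is a fin_num.
Proof. by move=> h; rewrite fin_numE fNy /= lt_eqF. Qed.

Lemma conv_mid {u v c} : (u < c)%R -> (c < v)%R ->
  f c <= (((v - c) / (v - u))%:E * f u + (1 - (v - c) / (v - u))%:E * f v).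
Proof.
move=> uc cv.
have vu : (0 < v - u)%R by lra.
have l01 : (0 <= (v - c) / (v - u) <= 1)%R.
  apply/andP; split; first by apply: divr_ge0; lra.
  by rewrite ler_pdivrMr // mul1r; lra.
have := fconv u v _ l01.
suff -> : ((v - c) / (v - u) * u + (1 - (v - c) / (v - u)) * v = c)%R by [].
by field; rewrite gt_eqF.
Qed.

Lemma fin_mid {u v c} : (u < c)%R -> (c < v)%R -> f u < +oo -> f v < +oo -> f c \is a fin_num.
Proof.
move=> uc cv fu fv; apply: fin_lty; apply: le_lt_trans (conv_mid uc cv) _.
have /fineK <- := fin_lty fu; have /fineK <- := fin_lty fv.
by rewrite -!EFinM -EFinD ltry.
Qed.

Lemma three_slope {u v c} : (u < c)%R -> (c < v)%R -> f u < +oo -> f v < +oo ->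
  ((fine (f c) - fine (f u)) / (c - u) <= (fine (f v) - fine (f c)) / (v - c))%R.
Proof.
move=> uc cv fu fv.
have := conv_mid uc cv.
have /fineK <- := fin_mid uc cv fu fv.
have /fineK <- := fin_lty fu; have /fineK <- := fin_lty fv.
rewrite -!EFinM -EFinD lee_fin.
set a := fine (f u); set b := fine (f c); set e := fine (f v) => h.
have vu : (0 < v - u)%R by lra.
rewrite ler_pdivrMr ?subr_gt0 // mulrAC ler_pdivlMr ?subr_gt0 //.
have h' : ((v - u) * b <= (v - c) * a + (c - u) * e)%R.
  rewrite -(ler_pM2l vu) in h.
  apply: le_trans h _; rewrite le_eqVlt; apply/orP; left; apply/eqP.
  by field; rewrite gt_eqF.
rewrite /=; clear h; nra.
Qed.

Lemma subgrad {p c q} : (p < c)%R -> (c < q)%R -> f p < +oo -> f q < +oo ->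
  exists a : R, forall u, (fine (f c) + a * (u - c))%:E <= f u.
Proof.
move=> pc cq fp fq.
have fcf := fin_mid pc cq fp fq.
set fc := fine (f c).
pose Ls := [set s : R | exists u, [/\ (u < c)%R, f u < +oo & s = ((fc - fine (f u)) / (c - u))%R]].
have Lsn : Ls !=set0 by exists ((fc - fine (f p)) / (c - p))%R; exists p.
have Lsub : ubound Ls ((fine (f q) - fc) / (q - c))%R.
  by move=> _ [u [uc fu ->]]; exact: three_slope.
have hsup : has_sup Ls by split => //; exists ((fine (f q) - fc) / (q - c))%R.
exists (sup Ls) => u.
have [fuy|fuf] := eqVneq (f u) +oo; first by rewrite fuy leey.
have fu : f u < +oo by rewrite ltey.
rewrite -(fineK (fin_lty fu)) lee_fin.
have [uc|cu|->] := ltgtP u c.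
- have : ((fc - fine (f u)) / (c - u) <= sup Ls)%R.
    by apply: sup_upper_bound => //; exists u.
  rewrite ler_pdivrMr ?subr_gt0 // => h.
  have -> : (sup Ls * (u - c) = - (sup Ls * (c - u)))%R by ring.
  lra.
- have : (sup Ls <= (fine (f u) - fc) / (u - c))%R.
    apply: ge_sup => // _ [v [vc fv ->]]; exact: three_slope.
  rewrite ler_pdivlMr ?subr_gt0 //; lra.
- by rewrite subrr mulr0 addr0.
Qed.

Lemma minorant : exists al ga : R, forall u, (al * u + ga)%:E <= f u.
Proof.
have [[p [q [pq fp fq]]]|] := pselect (exists p q, [/\ (p < q)%R, f p < +oo & f q < +oo]).
  have pc : (p < (p + q) / 2)%R by lra.
  have cq : ((p + q) / 2 < q)%R by lra.
  have [a ha] := subgrad pc cq fp fq.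
  exists a, (fine (f ((p + q) / 2)) - a * ((p + q) / 2))%R => u.
  by apply: le_trans (ha u); rewrite lee_fin le_eqVlt; apply/orP; left; apply/eqP; ring.
move=> nex; exists 0%R, 0%R => u; rewrite mul0r addr0.
have [fuy|fuf] := eqVneq (f u) +oo; first by rewrite fuy leey.
have fu : f u < +oo by rewrite ltey.
have f1y : f 1%R < +oo by rewrite f1 ltry.
have [u1|u1|->] := ltgtP u 1%R; last by rewrite f1.
- by exfalso; apply: nex; exists u, 1%R.
- by exfalso; apply: nex; exists 1%R, u.
Qed.

Lemma f_measurable : measurable_fun setT f.
Proof.
apply: (measurability _ (ErealGenInftyO.measurableE R)).
move=> /= _ [_ [r ->] <-]; apply: measurableI => //; apply: is_interval_measurable.
move=> x y /=; rewrite !in_itv /= => hx hy z /andP[xz zy].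
rewrite in_itv /=.
have [exy|xy] := eqVneq x y.
  by subst; have -> : z = y by apply/eqP; rewrite eq_le zy.
have [->|zx] := eqVneq z x; first by [].
have xz' : (x < z)%R by rewrite lt_neqAle eq_sym zx.
have [->|zy'] := eqVneq z y; first by [].
have zy2 : (z < y)%R by rewrite lt_neqAle zy'.
have fx : f x < +oo by rewrite (lt_trans hx) ?ltry.
have fy : f y < +oo by rewrite (lt_trans hy) ?ltry.
apply: le_lt_trans (conv_mid xz' zy2) _.
move: hx hy; rewrite -(fineK (fin_lty fx)) -(fineK (fin_lty fy)) !lte_fin => hx hy.
have l0 : (0 < (y - z) / (y - x))%R by apply: divr_gt0; lra.
have l1 : (0 < 1 - (y - z) / (y - x))%R.
  by rewrite subr_gt0 ltr_pdivrMr; lra.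
nra.
Qed.

End convex_an.
Section integ.
Context d (T : measurableType d) (R : realType) (mu : probability T R).
Local Set Implicit Arguments.
Variables (D : set T) (mD : measurable D).

Lemma G1 (g : T -> \bar R) (l : T -> R) : measurable_fun D g ->
  mu.-integrable D (EFin \o l) -> (forall x, D x -> (l x)%:E <= g x) ->
  \int[mu]_(x in D) (l x)%:E <= \int[mu]_(x in D) g x.
Proof.
move=> mg il lg; rewrite integralE [leRHS]integralE; apply: leeB.
- apply: ge0_le_integral => //.
  + by move/integrableP : il => [+ _]; exact: measurable_funepos.
  + exact: measurable_funepos.
  + by move=> x /mem_set; apply: funepos_le => y /set_mem /lg.
- apply: ge0_le_integral => //.
  + exact: measurable_funeneg.
  + by move/integrableP : il => [+ _]; exact: measurable_funeneg.
  + by move=> x /mem_set; apply: funeneg_le => y /set_mem /lg.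
Qed.

Lemma G2 (g : T -> \bar R) (l : T -> R) : measurable_fun D g ->
  mu.-integrable D (EFin \o l) -> (forall x, D x -> (l x)%:E <= g x) ->
  \int[mu]_(x in D) g x < +oo -> mu.-integrable D g.
Proof.
move=> mg il lg gy; apply/integrableP; split => //.
have hneg : \int[mu]_(x in D) g^\- x < +oo.
  apply: le_lt_trans (integral_funeneg_lt_pinfty mD il).
  apply: ge0_le_integral => //.
  + exact: measurable_funeneg.
  + by move/integrableP : il => [+ _]; exact: measurable_funeneg.
  + by move=> x /mem_set; apply: funeneg_le => y /set_mem /lg.
have hpos : \int[mu]_(x in D) g^\+ x < +oo.
  move: gy; rewrite integralE.
  have hn0 : 0 <= \int[mu]_(x in D) g^\- x by apply: integral_ge0.
  have hnf : \int[mu]_(x in D) g^\- x \is a fin_num by rewrite ge0_fin_numE.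
  case: (\int[mu]_(x in D) g^\+ x) => [r _| |] //; first exact: ltry.
  by rewrite addye //; case: (\int[mu]_(x in D) g^\- x) hnf.
rewrite (eq_integral (fun x => g^\+ x + g^\- x)); last first.
  by move=> x _; rewrite -[RHS]/((g^\+ \+ g^\-) x) -fune_abse.
rewrite ge0_integralD //; last 2 first.
  exact: measurable_funepos.
  exact: measurable_funeneg.
by rewrite lte_add_pinfty.
Qed.

Lemma H0 (h : T -> R) : measurable_fun D (EFin \o h) ->
  {ae mu, forall x, D x -> (0 <= h x)%R} ->
  \int[mu]_(x in D) (h x)%:E = 0 ->
  {ae mu, forall x, D x -> h x = 0%R}.
Proof.
move=> mh h0 ih.
have : \int[mu]_(x in D) `|(h x)%:E| = 0.
  rewrite -ih; apply: ae_eq_integral => //.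
  - exact: measurableT_comp.
  - apply: filterS h0 => x hx Dx; by rewrite gee0_abs // lee_fin hx.
move/(ae_eq_integral_abs mu mD mh).
by apply: filterS => x hx Dx; move: (hx Dx) => /= [].
Qed.

End integ.
Section jensen.
Context d (T : measurableType d) (R : realType) (mu : probability T R).
Local Set Implicit Arguments.
Variables (B : set T) (mB : measurable B) (k : T -> R).
Hypotheses (mk : measurable_fun setT k) (ik : mu.-integrable B (EFin \o k)).
Variables (b y : R).
Hypotheses (muB : mu B = b%:E) (intk : \int[mu]_(x in B) (k x)%:E = y%:E).

Lemma int_aff (a0 a1 : R) :
  mu.-integrable B (fun x => (a0 + a1 * k x)%:E) /\
  \int[mu]_(x in B) (a0 + a1 * k x)%:E = (a0 * b + a1 * y)%:E.
Proof.
have i1 := finite_measure_integrable_cst mu a0 mB.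
have i2 := integrableZl mB a1 ik.
have e : {in B, (EFin \o cst a0) \+ (fun x => a1%:E * (EFin \o k) x) =1 (fun x => (a0 + a1 * k x)%:E)}.
  by move=> x _ /=; rewrite EFinD EFinM.
split; first exact: (eq_integrable mB _ _ e (integrableD mB i1 i2)).
have -> : \int[mu]_(x in B) (a0 + a1 * k x)%:E =
    \int[mu]_(x in B) ((EFin \o cst a0) x + a1%:E * (EFin \o k) x).
  by apply: eq_integral => x xB; rewrite /= EFinD EFinM.
have c0 : \int[mu]_(x in B) (EFin \o cst a0) x = a0%:E * mu B 
  by rewrite -(integral_cst mu mB a0%:E); apply: eq_integral.
rewrite (integralD mB i1 i2) c0 integralZl // muB.
by rewrite -EFinM /= intk -EFinM -EFinD mulrC.
Qed.


Variable f : R -> \bar R.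
Hypothesis hf : closed_convex_fdiv_gen f.
Hypothesis b0 : (0 < b)%R.

Lemma jensen : b%:E * f (y / b) <= \int[mu]_(x in B) f (k x).
Proof.
have fNy u : f u != -oo by case: hf.
have [al [ga hmin]] := minorant hf.
have [il _] := int_aff ga al.
have lmin : forall x, B x -> ((fun x => ga + al * k x) x)%:E <= f (k x).
  by move=> x _ /=; rewrite addrC.
have mfk : measurable_fun B (fun x => f (k x)).
  apply: measurable_funS (measurableT_comp (f_measurable hf) mk) => //.
set c := (y / b)%R.
have [[p [q [pc cq fp fq]]]|nint] :=
  pselect (exists p q, [/\ (p < c)%R, (c < q)%R, f p < +oo & f q < +oo]).
  have fcf := fin_mid hf pc cq fp fq.
  have [a ha] := subgrad hf pc cq fp fq.
  set fc := fine (f c) in ha *.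
  have [il2 int2] := int_aff (fc - a * c) a.
  have hl : forall x, B x -> (fc - a * c + a * k x)%:E <= f (k x).
    move=> x _; apply: le_trans (ha (k x)).
    by rewrite lee_fin le_eqVlt; apply/orP; left; apply/eqP; ring.
  have := G1 mu mB mfk il2 hl.
  rewrite int2 -(fineK fcf) -/fc -EFinM; apply: le_trans.
  rewrite lee_fin le_eqVlt; apply/orP; left; apply/eqP.
  by rewrite /c; field; rewrite gt_eqF.
have [Iy|Ify] := eqVneq (\int[mu]_(x in B) f (k x)) +oo; first by rewrite Iy leey.
have ig : mu.-integrable B (fun x => f (k x)).
  by apply: (G2 mu mB mfk il lmin); rewrite ltey.
have fin := integrable_ae mB ig.
have Hs : forall s : R, s != 0%R ->
    {ae mu, forall x, B x -> (0 <= s * c + - s * k x)%R} ->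
    {ae mu, forall x, B x -> k x = c}.
  move=> s s0 hs.
  have [ih int3] := int_aff (s * c) (- s).
  have int0 : \int[mu]_(x in B) (s * c + - s * k x)%:E = 0.
    by rewrite int3 /c; congr EFin; field; rewrite gt_eqF.
  have := H0 mu mB (measurable_int mu ih) hs int0.
  apply: filterS => x hx Bx; have := hx Bx.
  have -> : (s * c + - s * k x = s * (c - k x))%R by ring.
  by move/eqP; rewrite mulf_eq0 (negbTE s0) /= subr_eq0 => /eqP ->.
have hkc : {ae mu, forall x, B x -> k x = c}.
  have [hr|hl] : (forall q, (c < q)%R -> f q = +oo) \/ (forall p, (p < c)%R -> f p = +oo).
  case: (pselect (exists q, (c < q)%R /\ f q < +oo)) => [[q [cq fq]]|nq].
    right => p pc; apply/eqP; apply: contrapT => /negP fp.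
    by apply: nint; exists p, q; split => //; rewrite ltey.
  left => q cq; apply/eqP; apply: contrapT => /negP fq.
  by apply: nq; exists q; rewrite ltey.
  - apply: (Hs 1%R); first exact: oner_neq0.
    apply: filterS fin => x hx Bx.
    rewrite mul1r mulN1r subr_ge0 leNgt; apply/negP => ck.
    by move: (hx Bx); rewrite hr.
  - apply: (Hs (-1)%R); first by rewrite oppr_eq0 oner_eq0.
    apply: filterS fin => x hx Bx.
    rewrite mulN1r opprK mul1r addrC subr_ge0 leNgt; apply/negP => kc.
    by move: (hx Bx); rewrite hl.
rewrite (ae_eq_integral (cst (f c))) //; last first.
  by apply: filterS hkc => x h Bx; rewrite /= h.
rewrite integral_cst //.
have -> : f c * mu B = f c * b%:E by congr (_ * _); exact: muB.
by rewrite muleC.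
Qed.

End jensen.
Section dp.
Variable R : realType.
Variable f : R -> \bar R.
Hypothesis hf : closed_convex_fdiv_gen f.
Variable rho : R.
Hypothesis rho0 : (0 <= rho)%R.

Lemma dp (S0 P : probability R R) (k : R -> R) (A : set R) (mA : measurable A) :
  is_density S0 P k -> \int[S0]_x f (k x) <= rho%:E ->
  hfun f (fine (P A)) (fine (S0 A)) <= rho%:E.
Proof.
move=> [mk k0 hP] hI.
have mAc : measurable (~` A) := measurableC mA.
set b := fine (S0 A); set z := fine (P A).
have S0A : S0 A = b%:E by rewrite /b fineK // fin_num_measure.
have PA : P A = z%:E by rewrite /z fineK // fin_num_measure.
have S0Ac : S0 (~` A) = (1 - b)%:E by rewrite probability_setC // EFinB -S0A.
have PAc : P (~` A) = (1 - z)%:E by rewrite probability_setC // EFinB -PA.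
have intA : \int[S0]_(x in A) (k x)%:E = z%:E by rewrite -hP // PA.
have intAc : \int[S0]_(x in ~` A) (k x)%:E = (1 - z)%:E by rewrite -hP // PAc.
have b0 : (0 <= b)%R by rewrite /b fine_ge0 // measure_ge0.
have b1 : (b <= 1)%R by rewrite -lee_fin -S0A probability_le1.
have z0 : (0 <= z)%R by rewrite /z fine_ge0 // measure_ge0.
have z1 : (z <= 1)%R by rewrite -lee_fin -PA probability_le1.
have mkE : measurable_fun setT (EFin \o k) by exact/measurable_EFinP.
have ik D (mD : measurable D) y : \int[S0]_(x in D) (k x)%:E = y%:E ->
    S0.-integrable D (EFin \o k).
  move=> iy; apply/integrableP; split; first exact: measurable_funS mkE.
  rewrite (eq_integral (fun x => (k x)%:E)) ?iy ?ltry // => x _.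
  by rewrite gee0_abs // lee_fin k0.
have rho0' : 0 <= rho%:E by rewrite lee_fin.
have [bz|bnz] := eqVneq b 0%R.
  have : P A = 0.
    rewrite hP // null_set_integral //; first exact: measurable_funS mkE.
    by apply: etrans S0A _; rewrite bz.
  rewrite PA => /eqP; rewrite eqe => /eqP ->; rewrite bz.
  by rewrite hfun_self // lexx ler01.
have [bo|bno] := eqVneq b 1%R.
  have : P (~` A) = 0.
    rewrite hP // null_set_integral //; first exact: measurable_funS mkE.
    by apply: etrans S0Ac _; rewrite bo subrr.
  rewrite PAc => /eqP; rewrite eqe subr_eq0 => /eqP <-; rewrite bo.
  by rewrite hfun_self // lexx ler01.
have bp : (0 < b)%R by rewrite lt0r bnz.
have bp1 : (0 < 1 - b)%R by rewrite subr_gt0 lt_neqAle bno.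
have j1 := jensen S0 mA mk (ik _ mA _ intA) S0A intA hf bp.
have j2 := jensen S0 mAc mk (ik _ mAc _ intAc) S0Ac intAc hf bp1.
rewrite /hfun /persp bp bp1.
apply: le_trans (leeD j1 j2) _.
rewrite -integral_setU //; last 2 first.
  apply: measurable_funS (measurableT_comp (f_measurable hf) mk) => //.
  by rewrite disj_set2E setICr.
by rewrite setUv.
Qed.

End dp.
Section dens.
Context (R : realType) (S0 : probability R R) (A : set R) (a c : R).
Definition Pd (mA : measurable A) (a0 : (0 <= a)%R) (c0 : (0 <= c)%R)
  (h1 : a%:E * S0 A + c%:E * S0 (~` A) = 1) : set R -> \bar R :=
  fun B => a%:E * S0 (B `&` A) + c%:E * S0 (B `&` ~` A).
Variables (mA : measurable A) (a0 : (0 <= a)%R) (c0 : (0 <= c)%R)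
  (h1 : a%:E * S0 A + c%:E * S0 (~` A) = 1).
Local Notation P := (Pd mA a0 c0 h1).

Let P0 : P set0 = 0.
Proof. by rewrite /Pd !set0I !measure0 !mule0 adde0. Qed.

Let P_ge0 B : 0 <= P B.
Proof. by rewrite /Pd adde_ge0 // mule_ge0 // lee_fin. Qed.

Let P_sa : semi_sigma_additive P.
Proof.
have e : P = measure_add (mscale (NngNum a0) (mrestr S0 mA))
                         (mscale (NngNum c0) (mrestr S0 (measurableC mA))).
  by apply/funext => B; rewrite measure_addE.
rewrite e; exact: measure_semi_sigma_additive.
Qed.

HB.instance Definition _ := isMeasure.Build _ _ _ P P0 P_ge0 P_sa.

Let PT : P setT = 1.
Proof. by rewrite /Pd !setTI. Qed.

HB.instance Definition _ := Measure_isProbability.Build _ _ _ P PT.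

End dens.

Definition Pdp (R : realType) (S0 : probability R R) (A : set R) (a c : R) mA a0 c0 h1 :
  probability R R := @Pd R S0 A a c mA a0 c0 h1.
Section construct.
Variable R : realType.
Local Set Implicit Arguments.

Lemma int_split (mu : probability R R) (A : set R) (mA : measurable A) (B : set R)
  (mB : measurable B) (g : R -> \bar R) (u v : \bar R) : measurable_fun setT g ->
  (forall x, A x -> g x = u) -> (forall x, ~ A x -> g x = v) ->
  \int[mu]_(x in B) g x = u * mu (B `&` A) + v * mu (B `&` ~` A).
Proof.
move=> mg gu gv.
have mAc : measurable (~` A) := measurableC mA.
rewrite -[in LHS](setIT B) -(setUv A) setIUr integral_setU //; last 4 first.
- exact: measurableI.
- exact: measurableI.
- exact: measurable_funS mg.
- by rewrite disj_set2E -setIIr setICr setI0.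
rewrite (eq_integral (cst u)); last by move=> x /set_mem [_ /gu].
rewrite [X in _ + X](eq_integral (cst v)); last by move=> x /set_mem [_ nA]; exact: gv.
by rewrite !integral_cst //; apply: measurableI.
Qed.

Variable f : R -> \bar R.
Hypothesis hf : closed_convex_fdiv_gen f.
Variable rho : R.
Hypothesis rho0 : (0 <= rho)%R.

Lemma fdiv_self (S0 : probability R R) : fdiv_le f S0 S0 rho.
Proof.
have f1 : f 1%R = 0 by case: hf.
exists (cst 1%R); split.
  split => //.
  move=> B mB; rewrite (eq_integral (cst 1%:E)); last by [].
  by rewrite integral_cst // mul1e.
by rewrite integral0_eq ?lee_fin // => x _ /=; rewrite f1.
Qed.

Lemma construct (S0 : probability R R) (A : set R) (mA : measurable A) z :
  (0 <= z <= 1)%R -> hfun f z (fine (S0 A)) <= rho%:E ->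
  exists P : probability R R, fdiv_le f P S0 rho /\ P A <= z%:E.
Proof.
move=> /andP[z0 z1] hz.
have mAc : measurable (~` A) := measurableC mA.
set b := fine (S0 A) in hz.
have S0A : S0 A = b%:E by rewrite /b fineK // fin_num_measure.
have S0Ac : S0 (~` A) = (1 - b)%:E by rewrite probability_setC // EFinB -S0A.
have b0 : (0 <= b)%R by rewrite /b fine_ge0 // measure_ge0.
have b1 : (b <= 1)%R by rewrite -lee_fin -S0A probability_le1.
have [bz|bnz] := eqVneq b 0%R.
  exists S0; split; first exact: fdiv_self.
  by rewrite S0A bz lee_fin.
have [bo|bno] := eqVneq b 1%R.
  have zo : z = 1%R.
    apply/eqP; apply: contraTT hz => zn1.
    rewrite /hfun /persp bo subrr ltxx ltr01 subr_eq0 eq_sym (negbTE zn1).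
    rewrite addey; last by apply: pmul_Ny => //; case: hf.
    by rewrite -ltNge ltry.
  exists S0; split; first exact: fdiv_self.
  by rewrite S0A bo zo.
have bp : (0 < b)%R by rewrite lt0r bnz.
have bp1 : (0 < 1 - b)%R by rewrite subr_gt0 lt_neqAle bno.
pose a := (z / b)%R; pose c := ((1 - z) / (1 - b))%R.
have a0 : (0 <= a)%R by apply: divr_ge0 => //; exact: ltW.
have c0 : (0 <= c)%R by apply: divr_ge0; [rewrite subr_ge0|exact: ltW].
have h1 : a%:E * S0 A + c%:E * S0 (~` A) = 1.
  rewrite S0A S0Ac -!EFinM -EFinD; congr EFin.
  by rewrite /a /c; field; rewrite !gt_eqF.
exists (@Pdp R S0 A a c mA a0 c0 h1).
pose k := fun x => (a * \1_A x + c * \1_(~` A) x)%R.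
have kA x : A x -> k x = a.
  by move=> Ax; rewrite /k !indicE mem_set // memNset // mulr1 mulr0 addr0.
have kAc x : ~ A x -> k x = c.
  by move=> nAx; rewrite /k !indicE memNset // mem_set // mulr1 mulr0 add0r.
have mk : measurable_fun setT k.
  by apply: measurable_funD; apply: measurable_funM.
have mkE : measurable_fun setT (EFin \o k) by exact/measurable_EFinP.
split.
  exists k; split.
    split => //.
      by move=> x; rewrite /k addr_ge0 // mulr_ge0 // indicE ler0n.
    move=> B mB.
    rewrite (@int_split S0 A mA B mB (EFin \o k) a%:E c%:E) //.
    - by move=> x /kA /= ->.
    - by move=> x /kAc /= ->.
  rewrite (@int_split S0 A mA setT measurableT (fun x => f (k x)) (f a) (f c)) //.
  - rewrite !setTI S0A S0Ac muleC [X in _ + X]muleC.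
    by move: hz; rewrite /hfun /persp bp bp1.
  - exact: measurableT_comp (f_measurable hf) mk.
  - by move=> x /kA ->.
  - by move=> x /kAc ->.
rewrite /= /Pd setIid setICr measure0 mule0 adde0 S0A -EFinM.
by rewrite /a divfK ?gt_eqF.
Qed.

End construct.
Theorem lemma18 (R : realType) (dX dY : measure_display)
  (X : measurableType dX) (Y : measurableType dY)
  (s : (X * Y)%type -> R) (hs : measurable_fun setT s)
  (d : nat) (hd : (0 < d)%N) (S : 'I_d -> probability (X * Y)%type R)
  (f : R -> \bar R) (hf : closed_convex_fdiv_gen f)
  (rho : R) (hrho : (0 < rho)%R) :
  let F := fun (i : 'I_d) (x : R) => fine (S i (s @^-1` `]-oo, x]%classic)) in
  let Fmin := fun x : R => \big[Order.min/1%R]_(i < d) F i x in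
  let Pfrho := [set P : probability R R | exists S0 : probability R R,
        in_CH (fun i A => S i (s @^-1` A)) S0 /\ fdiv_le f P S0 rho] in
  forall t : R,
    ereal_inf [set P `]-oo, t]%classic | P in Pfrho] = (gfun f rho (fun i => F i t))%:E /\
    gfun f rho (fun i => F i t) = gfun1 f rho (Fmin t).
Proof.
move=> F Fmin Pfrho t.
have rho0 : (0 <= rho)%R by exact: ltW.
set A := `]-oo, t]%classic.
have mA : measurable A by exact: measurable_itv.
have mpre B : measurable B -> measurable (s @^-1` B).
  by move=> mB; rewrite -[X in measurable X]setTI; exact: hs.
have mpA : measurable (s @^-1` A) by exact: mpre.
have SF i : S i (s @^-1` A) = (F i t)%:E.
  by rewrite /F fineK // fin_num_measure.
have F01 i : (0 <= F i t <= 1)%R.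
  by rewrite -!lee_fin -SF measure_ge0 probability_le1.
have [i0 _ hi0] := @eq_bigmin _ _ _ (1%R : R) (Ordinal hd) xpredT (fun i => F i t) isT
  (fun i _ => proj2 (andP (F01 i))).
have hmin : Fmin t = F i0 t by exact: hi0.
set m := Fmin t in hmin *.
have m0 : (0 <= m)%R by rewrite hmin; case/andP: (F01 i0).
have mle i : (m <= F i t <= 1)%R.
  by rewrite hmin; case/andP: (F01 i) => _ ->; rewrite andbT -hmin /m /Fmin bigmin_le.
have geq := gfun_eq hf rho rho0 (fun i => F i t) i0 m0 (esym hmin) mle.
split; last exact: geq.
rewrite geq.
pose Zm := [set z : R | (0 <= z <= 1)%R /\ hfun f z m <= rho%:E].
have m01 : (0 <= m <= 1)%R by have /andP[h1 h2] := mle i0; rewrite m0 (le_trans h1 h2).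
have Zmm : Zm m by exact: (Z_self hf rho rho0 m m01).
apply/eqP; rewrite eq_le; apply/andP; split.
  have key : forall z, Zm z -> ereal_inf [set P A | P in Pfrho] <= z%:E.
    move=> z [z01 hz].
    pose sm : {mfun (X * Y)%type >-> R} :=
      MeasurableFun.Pack (MeasurableFun.Class (isMeasurableFun.Build _ _ _ _ _ hs)).
    pose S0 : probability R R := distribution (S i0) sm.
    have S0A : fine (S0 A) = m by rewrite hmin.
    have [P [hP PA]] := construct hf rho rho0 S0 mA z z01 (ltac:(by rewrite S0A)).
    apply: ge_ereal_inf; exists (P A) => //; exists P => //; exists S0; split => //.
    exists (fun i => (i == i0)%:R); split.
    - by move=> i; rewrite ler0n.
    - by rewrite (bigD1 i0) //= eqxx big1 ?addr0 // => i /negbTE ->.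
    - move=> B mB; rewrite (bigD1 i0) //= eqxx mul1e big1 ?adde0 // => i /negbTE ->.
      by rewrite mul0e.
  move: key; case: (ereal_inf _) => [r| |] key.
  - rewrite lee_fin; apply: lb_le_inf; first by exists m.
    by move=> z Zz; rewrite -lee_fin; exact: key.
  - by have := key m Zmm; rewrite leNgt ltry.
  - exact: leNye.
apply/ereal_infP => _ [P [S0 [[lam [l0 l1 hS0]] [k [dens hI]]]] <-].
have hdp := dp _ _ hf rho rho0 S0 P k A mA dens hI.
have S0A : fine (S0 A) = (\sum_(i < d) lam i * F i t)%R.
  rewrite hS0 //.
  rewrite (eq_bigr (fun i => (lam i * F i t)%:E)); last by move=> i _; rewrite SF.
  by rewrite sumEFin.
have /andP[c1 c2] := sum_bounds mle (conj l0 l1).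
have PA : P A = (fine (P A))%:E by rewrite fineK // fin_num_measure.
have z01 : (0 <= fine (P A) <= 1)%R.
  by rewrite -!lee_fin -PA measure_ge0 probability_le1.
rewrite S0A in hdp.
rewrite PA lee_fin.
exact: (gfun1_le hf rho rho0 _ _ _ m0 z01 c1 c2 hdp).
Qed.
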